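(* Let $G$ be a connected graph and let $e_i$ be an edge of $G$ with end points $p_i,q_i$. For any $s,t\in V(G)$, $$t(G)\,t(\overline{G}_{i,st})=t(G_{st})\,t(\overline{G}_i)-\frac14\big[t(G_{p_is})-t(G_{q_is})-t(G_{p_it})+t(G_{q_it})\big]^2.$$
   Context: Graphs are finite and may have multiple edges and loops; $t(H)$ is the number of spanning trees of $H$; a one-vertex graph has $t=1$. For vertices $x,y$ of $H$, $H_{xy}$ is obtained by identifying $x$ and $y$, with the convention $t(H_{xx}):=0$. $\overline{G}_i$ is the graph obtained by contracting $e_i$, which for counting spanning trees is $G_{p_iq_i}$, and $\overline{G}_{i,st}$ is obtained from $\overline{G}_i$ by identifying $s$ and $t$ (i.e. $G_{p_iq_i,st}$). *)

(* Defs.v *)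
From mathcomp Require Import all_boot all_order all_algebra.
Set Implicit Arguments. Unset Strict Implicit. Unset Printing Implicit Defensive.

(* A finite multigraph (loops and multiple edges allowed) is given by a vertex
   set S : {set V} inside an ambient finType V, an edge type E (a finType) and
   an endpoint map en : E -> V * V. *)
Section Graphs.
Variables (V E : finType).

Definition mgraph := ({set V} * (E -> V * V))%type.

Definition adj (en : E -> V * V) (F : {set E}) : rel V :=
  fun u v => [exists e in F, (en e == (u, v)) || (en e == (v, u))].

Definition connected_on (S : {set V}) (en : E -> V * V) (F : {set E}) : bool :=
  [forall u in S, forall v in S, connect (adj en F) u v].

(* F is (the edge set of) a spanning tree of (S, en): (S, F) is connected and
   minimally so, i.e. no edge of F lies on a cycle (every edge of F is a bridge;
   in particular loops and duplicated parallel edges are excluded). *)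
Definition spanning_tree (S : {set V}) (en : E -> V * V) (F : {set E}) : bool :=
  connected_on S en F &&
  [forall e in F, ~~ connect (adj en (F :\ e)) (en e).1 (en e).2].

Definition ntrees (H : mgraph) : nat :=
  #|[set F : {set E} | spanning_tree H.1 H.2 F]|.

Definition connected_graph (H : mgraph) : bool := connected_on H.1 H.2 setT.

Definition idv (x y : V) (v : V) : V := if v == y then x else v.

(* H_{xy}: identify x and y (y is merged into x); meaningful for x != y *)
Definition ident (H : mgraph) (x y : V) : mgraph :=
  (H.1 :\ y, fun e => (idv x y (H.2 e).1, idv x y (H.2 e).2)).

(* t(H_{xy}) with the convention t(H_{xx}) = 0 *)
Definition tid (H : mgraph) (x y : V) : nat :=
  if x == y then 0 else ntrees (ident H x y).

(* t(H_{pq,st}): identify p and q, then identify (the images of) s and t;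
   by the convention t(H_{pp}) = 0 this is 0 when p = q. *)
Definition tid2 (H : mgraph) (p q s t : V) : nat :=
  if p == q then 0 else tid (ident H p q) (idv p q s) (idv p q t).

End Graphs.

(* Main.v *)
Require Import Defs.
From mathcomp Require Import all_boot all_order all_algebra.
From mathcomp Require Import ring.
Set Implicit Arguments. Unset Strict Implicit. Unset Printing Implicit Defensive.
Import GRing.Theory Num.Theory.

Lemma connect_homo (T : finType) (r R : rel T) :
  reflexive R -> transitive R -> subrel r R -> subrel (connect r) R.
Proof.
move=> Rr Rt sub x y /connectP [p]; elim: p x => [|z p IH] x /=.
  by move=> _ ->.
by case/andP=> rxz pz ly; apply: (Rt z); [apply: sub | apply: IH].
Qed.

Section Comb.
Variables (V E : finType).
Implicit Types (en : E -> V * V) (A B F D : {set E}) (S : {set V}) (x y u v w a b : V).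

Lemma adjC en A u v : adj en A u v = adj en A v u.
Proof.
apply/existsP/existsP => [] [f /andP [fA h]]; exists f; rewrite fA /=;
  by rewrite orbC.
Qed.

Lemma adj_sym en A : connect_sym (adj en A).
Proof. by apply: sym_connect_sym => u v; apply: adjC. Qed.

Lemma adjP en A u v :
  reflect (exists2 f, f \in A & (en f = (u, v)) \/ (en f = (v, u))) (adj en A u v).
Proof.
apply: (iffP existsP) => [[f /andP [fA /orP [/eqP h|/eqP h]]]|[f fA [h|h]]];
  exists f => //; try by [left|right]; by rewrite fA h eqxx ?orbT.
Qed.

Lemma connect_mono en A B : A \subset B -> subrel (connect (adj en A)) (connect (adj en B)).
Proof.
move=> sAB; apply: connect_sub => u v /adjP [f fA h]; apply: connect1.
by apply/adjP; exists f => //; apply: (subsetP sAB).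
Qed.

Lemma connect_set0 en u v : connect (adj en set0) u v -> u = v.
Proof.
move=> h; apply/eqP; move: h; apply: (@connect_homo _ _ (fun a b => a == b)).
- by move=> ?.
- by move=> a b c /eqP -> /eqP ->.
- by move=> a b /adjP [f]; rewrite inE.
Qed.

Definition cen en (x y : V) : E -> V * V :=
  fun f => (idv x y (en f).1, idv x y (en f).2).

Lemma idv_id x y v : v != y -> idv x y v = v.
Proof. by rewrite /idv => /negbTE ->. Qed.

Lemma idvy x y : idv x y y = x.
Proof. by rewrite /idv eqxx. Qed.

Lemma idv_neq x y v : x != y -> idv x y v != y.
Proof. by rewrite /idv; case: ifP => // /negbT. Qed.

Lemma K1 en e x y A a b : en e = (x, y) -> e \in A ->
  connect (adj en A) a b = connect (adj (cen en x y) (A :\ e)) (idv x y a) (idv x y b).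
Proof.
move=> ee eA; apply/idP/idP.
  apply: (@connect_homo _ _ (fun u v => connect (adj (cen en x y) (A :\ e)) (idv x y u) (idv x y v))).
  - by move=> ?; apply: connect0.
  - by move=> u v w; apply: connect_trans.
  move=> u v /adjP [f fA h].
  have [fe|fe] := eqVneq f e.
    subst f; rewrite ee in h; case: h => [[<- <-]|[<- <-]];
      rewrite idvy /idv; case: ifP => _; apply: connect0.
  apply: connect1; apply/adjP; exists f; first by rewrite !inE fe.
  by rewrite /cen; case: h => ->; [left|right].
have wi : forall w, connect (adj en A) w (idv x y w).
  move=> w; rewrite /idv; case: ifP => [/eqP ->|_]; last exact: connect0.
  by apply: connect1; apply/adjP; exists e => //; right.
have iw : forall w, connect (adj en A) (idv x y w) w.
  by move=> w; rewrite (adj_sym en A); apply: wi.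
move=> h; apply: (connect_trans (wi a)); apply: (connect_trans _ (iw b)).
move: h; apply: connect_homo.
- by move=> ?; apply: connect0.
- by move=> u v w; apply: connect_trans.
move=> u v /adjP [f]; rewrite inE => /andP [_ fA] h.
have ff : connect (adj en A) (en f).1 (en f).2.
  by apply: connect1; apply/adjP; exists f => //; left; case: (en f).
rewrite /cen in h; case: h => -[<- <-].
  by apply: (connect_trans (iw _)); apply: (connect_trans ff); apply: wi.
apply: (connect_trans (iw _)); rewrite adj_sym in ff.
by apply: (connect_trans ff); apply: wi.
Qed.


Lemma sep_closed en A f x y : connect (adj en A) x y ->
  connect (adj en (A :\ f)) x (en f).1 = connect (adj en (A :\ f)) x (en f).2 ->
  connect (adj en (A :\ f)) x y.
Proof.
move=> cxy heq.
suff /(_ x y cxy) /implyP : subrel (connect (adj en A)) (fun u v => connect (adj en (A :\ f)) x u ==> connect (adj en (A :\ f)) x v).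
  by apply; apply: connect0.
apply: connect_homo.
- by move=> ?; apply/implyP.
- by move=> u v w /implyP h1 /implyP h2; apply/implyP => /h1 /h2.
move=> u v /adjP [g gA h]; apply/implyP => cu.
have [gf|gf] := eqVneq g f.
  subst g; case: h => [] eq; rewrite eq /= in heq.
    by rewrite -heq.
  by rewrite heq.
apply: (connect_trans cu); apply: connect1; apply/adjP; exists g => //.
by rewrite !inE gf.
Qed.

Lemma cycle_lem en e x y : en e = (x, y) -> x != y -> forall A,
  connect (adj en A) x y ->
  exists2 f, f \in A & connect (adj en ((A :\ f) :|: [set e])) (en f).1 (en f).2.
Proof.
move=> ee xy A; move: {2}#|A| (erefl #|A|) => k; elim: k A => [|k IH] A cA cxy.
  move/eqP: cA; rewrite cards_eq0 => /eqP A0; subst A.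
  by move/connect_set0: cxy => exy; rewrite exy eqxx in xy.
have [f fA] : exists f, f \in A.
  apply/existsP; rewrite -(negbK [exists f, _]) negb_exists; apply/negP => /forallP h.
  have A0 : A = set0 by apply/setP => z; rewrite inE; apply/negbTE/h.
  by move: cA; rewrite A0 cards0.
set B := (A :\ f) :|: [set e].
have [hf|hf] := boolP (connect (adj en B) (en f).1 (en f).2); first by exists f.
have [c2|c2] := boolP (connect (adj en (A :\ f)) x y).
  have cA' : #|A :\ f| = k by move: cA; rewrite (cardsD1 f A) fA add1n => -[].
  have [g] := IH _ cA' c2; rewrite inE => /andP [gf gA] cg.
  exists g => //; move: cg; apply: connect_mono.
  by apply/subsetP => z; rewrite !inE => /orP [/andP [-> /andP [_ ->]]|->]; rewrite ?orbT.
exfalso; move/negP: hf; apply.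
have sB : A :\ f \subset B by apply: subsetUl.
have eB : connect (adj en B) x y.
  by apply: connect1; apply/adjP; exists e; [rewrite !inE eqxx orbT| left].
have cx : connect (adj en (A :\ f)) x (en f).1 != connect (adj en (A :\ f)) x (en f).2.
  by apply/negP => /eqP h; move/negP: c2; apply; apply: sep_closed h.
have cyx : connect (adj en A) y x by rewrite adj_sym.
have cy : connect (adj en (A :\ f)) y (en f).1 != connect (adj en (A :\ f)) y (en f).2.
  by apply/negP => /eqP h; move/negP: c2; rewrite adj_sym; apply; apply: sep_closed h.
have nboth : forall w, connect (adj en (A :\ f)) x w -> connect (adj en (A :\ f)) y w -> False.
  move=> w h1 h2; move/negP: c2; apply; apply: (connect_trans h1); by rewrite adj_sym.
have mB := connect_mono sB.
case h1: (connect (adj en (A :\ f)) x (en f).1) cx => /= cx.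
  have h2 : connect (adj en (A :\ f)) y (en f).2.
    case h3: (connect (adj en (A :\ f)) y (en f).1) cy; first by case: (nboth _ h1 h3).
    by case: (connect (adj en (A :\ f)) y (en f).2).
  apply: (connect_trans (y := x)); first by apply: mB; rewrite adj_sym.
  by apply: (connect_trans eB); apply: mB.
have h1' : connect (adj en (A :\ f)) x (en f).2.
  by move: cx; case: (connect (adj en (A :\ f)) x (en f).2).
have h2 : connect (adj en (A :\ f)) y (en f).1.
  case h3: (connect (adj en (A :\ f)) y (en f).1) cy => //.
  case h4: (connect (adj en (A :\ f)) y (en f).2) => // _.
  by case: (nboth _ h1' h4).
apply: (connect_trans (y := y)); first by apply: mB; rewrite adj_sym.
rewrite adj_sym in eB; apply: (connect_trans eB); by apply: mB.
Qed.


Lemma setD1C (T : finType) (A : {set T}) (a1 b1 : T) : (A :\ a1) :\ b1 = (A :\ b1) :\ a1.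
Proof. by apply/setP => z; rewrite !inE; case: (z == a1); case: (z == b1). Qed.

Lemma bridge_K en e x y F f : en e = (x, y) -> e \in F -> f != e ->
  connect (adj en (F :\ f)) (en f).1 (en f).2 =
  connect (adj (cen en x y) ((F :\ e) :\ f)) (cen en x y f).1 (cen en x y f).2.
Proof.
move=> ee eF fe; rewrite (K1 _ _ ee); first by rewrite setD1C.
by rewrite !inE eq_sym fe.
Qed.

Lemma tree_contract en e x y S F : en e = (x, y) -> x != y -> x \in S -> y \in S ->
  e \in F -> spanning_tree S en F = spanning_tree (S :\ y) (cen en x y) (F :\ e).
Proof.
move=> ee xy xS yS eF.
have idvS : forall u, u \in S -> idv x y u \in S :\ y.
  move=> u uS; rewrite !inE idv_neq //=; rewrite /idv; by case: ifP.
have conn : connected_on S en F = connected_on (S :\ y) (cen en x y) (F :\ e).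
  apply/idP/idP => /forall_inP h; apply/forall_inP => u uS; apply/forall_inP => v vS.
    move: uS vS; rewrite !inE => /andP [uy uS] /andP [vy vS].
    move/forall_inP: (h u uS) => /(_ v vS).
    by rewrite (K1 _ _ ee eF) !idv_id.
  move/forall_inP: (h _ (idvS u uS)) => /(_ _ (idvS v vS)).
  by rewrite -(K1 _ _ ee eF).
rewrite /spanning_tree conn; congr (_ && _).
apply/idP/idP => /forall_inP h; apply/forall_inP => f fF.
  move: fF; rewrite !inE => /andP [fe fF].
  by rewrite -bridge_K //; apply: h.
have [fe|fe] := eqVneq f e; last first.
  rewrite (@bridge_K en e x y F f ee eF fe); apply: h; by rewrite !inE fe.
subst f; rewrite ee /=; apply/negP => cxy.
have [g gA cg] := cycle_lem ee xy cxy.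
have gF : g \in F :\ e := gA.
move/negP: (h g gF); apply.
have eB : e \in (F :\ e :\ g) :|: [set e] by rewrite !inE eqxx orbT.
rewrite (K1 _ _ ee eB) in cg.
suff <- : ((F :\ e :\ g) :|: [set e]) :\ e = (F :\ e) :\ g by [].
by apply/setP => z; rewrite !inE; case: (z == e); case: (z == g); case: (z \in F).
Qed.

Definition ntD S en D := #|[set F : {set E} | (F \subset D) && spanning_tree S en F]|.

Lemma ntD_loop S en D e : e \notin D -> (en e).1 = (en e).2 ->
  ntD S en (e |: D) = ntD S en D.
Proof.
move=> eD loop; rewrite /ntD; apply: eq_card => F; rewrite !inE.
case st: (spanning_tree S en F); rewrite ?andbF ?andbT //.
have eF : e \notin F.
  apply/negP => eF; move: st => /andP [_ /forall_inP /(_ e eF)].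
  by rewrite loop connect0.
apply/idP/idP => /subsetP h; apply/subsetP => z zF; last by rewrite !inE h ?orbT.
have := h z zF; rewrite !inE => /orP [/eqP ze|//].
by subst z; rewrite zF in eF.
Qed.

Lemma ntD_dc S en D e x y : e \notin D -> en e = (x, y) -> x != y -> x \in S -> y \in S ->
  ntD S en (e |: D) = ntD S en D + ntD (S :\ y) (cen en x y) D.
Proof.
move=> eD ee xy xS yS; rewrite /ntD.
set A := [set F | _].
rewrite -(cardsID [set F : {set E} | e \in F] A) addnC; congr (_ + _).
  apply: eq_card => F; rewrite !inE.
  case eF: (e \in F) => /=.
    by symmetry; apply/negbTE/negP => /andP [/subsetP h _]; rewrite (h e eF) in eD.
  congr (_ && _); apply/idP/idP => /subsetP h; apply/subsetP => z zF.
    by have := h z zF; rewrite !inE => /orP [/eqP ze|//]; subst z; rewrite zF in eF.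
  by rewrite !inE h ?orbT.
have inj : {in [set F : {set E} | (F \subset D) && spanning_tree (S :\ y) (cen en x y) F] &, injective (fun F => e |: F)}.
  move=> F1 F2; rewrite !inE => /andP [s1 _] /andP [s2 _] h.
  have e1 : e \notin F1 by apply/negP => hh; by rewrite (subsetP s1 _ hh) in eD.
  have e2 : e \notin F2 by apply/negP => hh; by rewrite (subsetP s2 _ hh) in eD.
  by rewrite -(setU1K e1) -(setU1K e2) h.
rewrite -(card_in_imset inj).
apply: eq_card => F; rewrite !inE.
apply/idP/idP.
  case/andP => /andP [sF stF] eF; apply/imsetP; exists (F :\ e); last by rewrite setD1K.
  rewrite inE -tree_contract // stF andbT.
  apply/subsetP => z; rewrite !inE => /andP [ze zF].
  by have := subsetP sF z zF; rewrite !inE (negbTE ze).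
case/imsetP => F' ; rewrite inE => /andP [sF' stF'] ->.
have eF' : e \notin F' by apply/negP => hh; by rewrite (subsetP sF' _ hh) in eD.
rewrite !inE eqxx /= (tree_contract ee) ?setU1K // ?stF' ?andbT ?inE ?eqxx //.
by apply/subsetP => z; rewrite !inE => /orP [->|/(subsetP sF') ->]; rewrite ?orbT.
Qed.


Lemma exists_tree S en F : connected_on S en F ->
  exists F', (F' \subset F) && spanning_tree S en F'.
Proof.
move: {2}#|F| (erefl #|F|) => k; elim: k F => [|k IH] F cF conF.
  exists F; rewrite subxx /spanning_tree conF /=; apply/forall_inP => f fF.
  by move/eqP: cF; rewrite cards_eq0 => /eqP F0; rewrite F0 inE in fF.
have [allb|] := boolP [forall f in F, ~~ connect (adj en (F :\ f)) (en f).1 (en f).2].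
  by exists F; rewrite subxx /spanning_tree conF allb.
rewrite negb_forall_in => /existsP [f /andP [fF /negbNE cf]].
have conF' : connected_on S en (F :\ f).
  apply/forall_inP => u uS; apply/forall_inP => v vS.
  move/forall_inP: conF => /(_ u uS) /forall_inP /(_ v vS).
  apply: connect_sub => a b /adjP [g gF h].
  have [gf|gf] := eqVneq g f.
    subst g; case: h => eq; rewrite eq /= in cf => //.
    by rewrite adj_sym.
  by apply: connect1; apply/adjP; exists g => //; rewrite !inE gf.
have cF' : #|F :\ f| = k by move: cF; rewrite (cardsD1 f F) fF add1n => -[].
have [F' /andP [s1 s2]] := IH _ cF' conF'.
exists F'; rewrite s2 andbT; apply: (subset_trans s1); apply: subsetDl.
Qed.

End Comb.

Local Open Scope ring_scope.

Lemma syl (R : comRingType) n k (A : 'M[R]_(n, k)) (B : 'M[R]_(k, n)) :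
  \det (1%:M + A *m B) = \det (1%:M + B *m A).
Proof.
have h1 : block_mx 1%:M (-A) B 1%:M =
          block_mx 1%:M 0 B 1%:M *m block_mx 1%:M (-A) 0 (1%:M + B *m A).
  rewrite mulmx_block !mul1mx !mulmx1 ?mul0mx ?mulmx0 ?addr0 ?add0r.
  by rewrite mulmxN addrCA addNr addr0.
have h2 : block_mx 1%:M (-A) B 1%:M =
          block_mx (1%:M + A *m B) (-A) 0 1%:M *m block_mx 1%:M 0 B 1%:M.
  rewrite mulmx_block !mul1mx !mulmx1 ?mul0mx ?mulmx0 ?addr0 ?add0r.
  by rewrite mulNmx -addrA subrr addr0.
have := congr1 determinant h1; rewrite h2 !det_mulmx det_lblock det_ublock.
by rewrite det_ublock !det1 !mul1r !mulr1 => ->.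
Qed.

Lemma det2' (R : comRingType) (A : 'M[R]_2) : \det A = A 0 0 * A 1 1 - A 0 1 * A 1 0.
Proof.
rewrite (expand_det_row _ 0) !big_ord_recl big_ord0 addr0 /cofactor !det_mx11 !mxE /=.
rewrite expr0 expr1 mul1r mulN1r mulrN.
by congr (A _ _ * A _ _ - A _ _ * A _ _); apply: val_inj.
Qed.

Lemma det_block11 (R : comRingType) (a b c d : 'M[R]_1) :
  \det (block_mx a b c d) = a 0 0 * d 0 0 - b 0 0 * c 0 0.
Proof.
rewrite det2'.
have e0 : (0 : 'I_2) = lshift 1 (0 : 'I_1) by apply: val_inj.
have e1 : (1 : 'I_2) = rshift 1 (0 : 'I_1) by apply: val_inj.
rewrite e0 e1.
by rewrite (block_mxEul a b c d) (block_mxEur a b c d) (block_mxEdl a b c d) (block_mxEdr a b c d).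
Qed.

Lemma rank2 m (M : 'M[rat]_m) (u v : 'cV[rat]_m) (c d : rat) : M \in unitmx ->
  \det (M + c *: (u *m u^T) + d *: (v *m v^T)) =
  \det M * ((1 + c * (u^T *m invmx M *m u) 0 0) * (1 + d * (v^T *m invmx M *m v) 0 0)
            - c * d * (u^T *m invmx M *m v) 0 0 * (v^T *m invmx M *m u) 0 0).
Proof.
move=> Mu.
set W : 'M_(m, 1 + 1) := row_mx (c *: u) (d *: v).
set Vt : 'M_(1 + 1, m) := col_mx u^T v^T.
have WV : W *m Vt = c *: (u *m u^T) + d *: (v *m v^T).
  by rewrite /W /Vt mul_row_col -!scalemxAl.
have -> : M + c *: (u *m u^T) + d *: (v *m v^T) = M *m (1%:M + invmx M *m W *m Vt).
  by rewrite mulmxDr mulmx1 -mulmxA !mulmxA (mulmxV Mu) mul1mx WV addrA.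
rewrite det_mulmx syl; congr (_ * _).
rewrite /Vt /W mulmxA mul_col_mx mul_col_row (scalar_mx_block 1 1) add_block_mx.
rewrite det_block11 -!scalemxAr !add0r !mxE /= !mulr1n.
ring.
Qed.

Section Lin.
Variable V : finType.
Local Notation n := #|V|.
Local Notation MM := 'M[rat]_n.
Implicit Types (T U S : {set V}) (x y a b v r : V).

Definition ev (i : 'I_n) : V := enum_val i.
Definition er (v : V) : 'I_n := enum_rank v.

Lemma evK : cancel ev er. Proof. exact: enum_valK. Qed.
Lemma erK : cancel er ev. Proof. exact: enum_rankK. Qed.

Lemma ev_eq i v : (ev i == v) = (i == er v).
Proof. by apply/eqP/eqP => [<-|->]; rewrite ?evK ?erK. Qed.

Definition ee (v : V) : 'cV[rat]_n := \col_i (ev i == v)%:R.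
Definition bc (x y : V) : 'cV[rat]_n := ee x - ee y.
Definition Zm (T : {set V}) : MM := diag_mx (\row_i (ev i \in T)%:R).
Definition Rm (A : MM) (T : {set V}) : MM :=
  \matrix_(i, j) if (ev i \in T) && (ev j \in T) then A i j else (i == j)%:R.
Definition Pm (x y : V) : MM := \matrix_(i, k) (idv x y (ev k) == ev i)%:R.

Lemma ee_delta v : ee v = delta_mx (er v) 0.
Proof. by apply/matrixP => i j; rewrite !mxE ev_eq ord1 eqxx andbT. Qed.

Lemma trZ T : (Zm T)^T = Zm T.
Proof. exact: tr_diag_mx. Qed.

Lemma Rm_Z A T : Rm A T = Zm T *m A *m Zm T + (1%:M - Zm T).
Proof.
apply/matrixP => i j; rewrite /Zm mul_mx_diag mul_diag_mx !mxE.
case: (i =P j) => [<-|ne] /=.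
  by case: (ev i \in T); rewrite /= ?mul1r ?mulr1 ?mul0r ?mulr0 ?add0r ?addr0 ?subrr ?subr0.
by case: (ev i \in T); case: (ev j \in T); rewrite /= ?mul1r ?mulr1 ?mul0r ?mulr0 ?add0r ?addr0 ?subrr ?subr0.
Qed.


Lemma Zm_ee T v : Zm T *m ee v = if v \in T then ee v else 0.
Proof.
apply/matrixP => i j; rewrite /Zm mul_diag_mx !mxE.
case vT: (v \in T); rewrite !mxE; case: (ev i =P v) => [->|_]; rewrite ?vT ?mulr1 ?mulr0 //.
Qed.

Lemma eeT_ee a b : (ee a)^T *m ee b = (a == b)%:R%:M :> 'M_1.
Proof.
rewrite !ee_delta trmx_delta mul_delta_mx_cond.
have -> : (er a == er b) = (a == b).
  by apply/eqP/eqP => [h|->] //; rewrite -(erK a) -(erK b) h.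
by case: (a == b); apply/matrixP => i j; rewrite !ord1 !mxE.
Qed.


Lemma Rm_rank1 A T (c : rat) (u : 'cV[rat]_n) :
  Rm (A + c *: (u *m u^T)) T = Rm A T + c *: ((Zm T *m u) *m (Zm T *m u)^T).
Proof.
rewrite !Rm_Z mulmxDr mulmxDl -addrA [_ + (1%:M - _)]addrC addrA; congr (_ + _).
by rewrite trmx_mul trZ -scalemxAr -scalemxAl !mulmxA.
Qed.

Lemma RmP A U (X Y : MM) : Zm U *m X = Zm U *m Y ->
  Rm (X *m A *m X^T) U = Rm (Y *m A *m Y^T) U.
Proof.
move=> h; rewrite !Rm_Z; congr (_ + _).
have e : forall W : MM, Zm U *m (W *m A *m W^T) *m Zm U = (Zm U *m W) *m A *m (Zm U *m W)^T.
  by move=> W; rewrite trmx_mul trZ !mulmxA.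
by rewrite !e h.
Qed.

Lemma ZP_id U x y : x \notin U -> y \notin U -> Zm U *m Pm x y = Zm U.
Proof.
move=> xU yU; apply/matrixP => i k; rewrite /Zm mul_diag_mx !mxE.
case iU: (ev i \in U); rewrite ?mul1r ?mul0r ?mul0rn //=.
rewrite /idv; case: ifP => [/eqP eky|_].
  have ne1 : x != ev i by apply: contraNneq xU => ->.
  have ik : (i == k) = false.
    apply/negbTE; apply: contraNneq yU => ik.
    by rewrite -eky -ik iU.
  by rewrite (negbTE ne1) ik.
by rewrite eq_sym ev_eq evK.
Qed.

Lemma ZQ U x y : y \notin U -> Zm U *m (1%:M + ee x *m (ee y)^T) = Zm U *m Pm x y.
Proof.
move=> yU; apply/matrixP => i k; rewrite /Zm !mul_diag_mx !mxE.
case iU: (ev i \in U); rewrite ?mul1r ?mul0r //=.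
rewrite big_ord1 !mxE /idv.
have iy : ev i != y by apply: contraNneq yU => <-.
case: ifP => [/eqP eky|_].
  have -> : (i == k) = false by apply/negbTE; apply: contra iy => /eqP ->; rewrite eky.
  by rewrite mulr1 add0r eq_sym.
by rewrite mulr0 addr0 eq_sym ev_eq evK.
Qed.

Lemma Pm_ee x y v : Pm x y *m ee v = ee (idv x y v).
Proof.
by rewrite ee_delta -colE; apply/matrixP => i j; rewrite !mxE erK eq_sym.
Qed.

Lemma Pm_bc x y a b : Pm x y *m bc a b = bc (idv x y a) (idv x y b).
Proof. by rewrite /bc mulmxBr !Pm_ee. Qed.


Lemma ee_ee v : ee v *m (ee v)^T = delta_mx (er v) (er v).
Proof. by rewrite ee_delta trmx_delta mul_delta_mx. Qed.

Lemma cof_step N T y (c : rat) : y \in T ->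
  \det (Rm N T + c *: (ee y *m (ee y)^T)) = \det (Rm N T) + c * \det (Rm N (T :\ y)).
Proof.
move=> yT; rewrite ee_ee; set Y := er y.
have cofE : forall j, cofactor (Rm N T + c *: delta_mx Y Y) Y j = cofactor (Rm N T) Y j.
  move=> j; rewrite /cofactor; congr (_ * \det _); apply/matrixP => a b; rewrite !mxE.
  have -> : (lift Y a == Y) = false by rewrite eq_sym; apply/negbTE/neq_lift.
  by rewrite /= mulr0 addr0.
rewrite (expand_det_row _ Y) (expand_det_row (Rm N T) Y).
under eq_bigr => j _ do rewrite cofE !mxE eqxx /= mulrDl.
rewrite big_split /=; congr (_ + _).
  by apply: eq_bigr => j _; rewrite !mxE.
rewrite (bigD1 Y) //= big1 ?addr0; last first.
  by move=> j /negbTE jY; rewrite jY /= mulr0 mul0r.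
rewrite eqxx /= mulr1.
rewrite (expand_det_row (Rm N (T :\ y)) Y) (bigD1 Y) //= big1 ?addr0; last first.
  move=> j jY; rewrite !mxE /Y erK !inE eqxx /= eq_sym.
  by rewrite (negbTE jY) mul0r.
rewrite !mxE /Y erK !inE !eqxx /= mul1r; congr (_ * _).
rewrite /cofactor; congr (_ * \det _); apply/matrixP => a b; rewrite !mxE.
rewrite !inE.
have -> : (ev (lift (er y) a) == y) = false.
  by apply/negbTE; rewrite ev_eq eq_sym neq_lift.
have -> : (ev (lift (er y) b) == y) = false.
  by apply/negbTE; rewrite ev_eq eq_sym neq_lift.
by [].
Qed.


Lemma setD1C' (A : {set V}) a1 b1 : (A :\ a1) :\ b1 = (A :\ b1) :\ a1.
Proof. by apply/setP => z; rewrite !inE; case: (z == a1); case: (z == b1). Qed.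

Lemma Rm_P1 A U x y : x \notin U -> y \notin U ->
  Rm (Pm x y *m A *m (Pm x y)^T) U = Rm A U.
Proof.
move=> xU yU; rewrite (@RmP A U (Pm x y) 1%:M); last by rewrite ZP_id // mulmx1.
by rewrite mul1mx trmx1 mulmx1.
Qed.

Lemma neg_rank1 (u : 'cV[rat]_n) : (- u) *m (- u)^T = u *m u^T.
Proof. by rewrite linearN /= mulNmx mulmxN opprK. Qed.

Lemma merge_det A S x y r (c : rat) : x != y -> x \in S -> y \in S -> r \in S ->
  \det (Rm (A + c *: (bc x y *m (bc x y)^T)) (S :\ r)) =
  \det (Rm A (S :\ r)) + c * \det (Rm (Pm x y *m A *m (Pm x y)^T) ((S :\ y) :\ idv x y r)).
Proof.
move=> xy xS yS rS; rewrite Rm_rank1 /bc mulmxBr !Zm_ee !inE.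
have [rx|rx] := eqVneq r x.
  subst r; rewrite [y == x]eq_sym xy yS /= sub0r neg_rank1.
  rewrite cof_step; last by rewrite !inE eq_sym xy.
  have -> : idv x y x = x by rewrite /idv; case: ifP.
  rewrite Rm_P1; first by rewrite (setD1C' S x y).
    by rewrite !inE eqxx.
  by rewrite !inE eqxx /= ?andbF.
have [ry|ry] := eqVneq r y.
  subst r; rewrite xS /= subr0 cof_step; last by rewrite !inE xy.
  by rewrite /idv eqxx Rm_P1 // !inE eqxx /= ?andbF.
rewrite xS yS /=.
have idr : idv x y r = r by rewrite /idv; case: (r =P y) => // ry'; rewrite ry' eqxx in ry.
rewrite idr -(setD1C' S r y).
set T := S :\ r.
have xT : x \in T by rewrite !inE xS eq_sym rx.
have yT : y \in T by rewrite !inE yS eq_sym ry.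
set Q : MM := 1%:M + ee x *m (ee y)^T.
have detQ : \det Q = 1.
  rewrite /Q syl eeT_ee eq_sym (negbTE xy).
  have -> : ((false%:R)%:M : 'M[rat]_1) = 0 by apply/matrixP => i j; rewrite !mxE mul0rn.
  by rewrite addr0 det1.
have e1 : (ee y)^T *m Zm T = (ee y)^T by rewrite -{1}trZ -trmx_mul Zm_ee yT.
have e2 : Zm T *m ee x = ee x by rewrite Zm_ee xT.
have QZ : Q *m Zm T = Zm T *m Q.
  by rewrite /Q mulmxDl mulmxDr mul1mx mulmx1 -mulmxA e1 mulmxA e2.
have Q1Z : Q *m (1%:M - Zm T) = 1%:M - Zm T.
  rewrite mulmxBr mulmx1 QZ /Q mulmxDr mulmx1 mulmxA e2.
  by rewrite opprD addrACA subrr addr0.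
have tr1Z : (1%:M - Zm T)^T = 1%:M - Zm T by rewrite linearB /= trmx1 trZ.
have ZQt : (1%:M - Zm T) *m Q^T = 1%:M - Zm T by rewrite -{1}tr1Z -trmx_mul Q1Z tr1Z.
have ZQt2 : Zm T *m Q^T = Q^T *m Zm T by rewrite -{1}trZ -trmx_mul QZ trmx_mul trZ.
have conj : forall B, Q *m Rm B T *m Q^T = Rm (Q *m B *m Q^T) T.
  move=> B; rewrite !Rm_Z mulmxDr mulmxDl Q1Z ZQt !mulmxA QZ; congr (_ + _).
  by rewrite -[_ *m Zm T *m Q^T]mulmxA ZQt2 !mulmxA.
have Qb : Q *m (ee x - ee y) = - ee y.
  rewrite /Q mulmxDl mul1mx -mulmxA mulmxBr !eeT_ee eqxx (eq_sym y x) (negbTE xy).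
  have -> : ((false%:R)%:M - (true%:R)%:M : 'M[rat]_1) = - 1%:M.
    by apply/matrixP => i j; rewrite !mxE mul0rn sub0r.
  by rewrite mulmxN mulmx1 addrC addKr.
have Zb : Zm T *m (ee x - ee y) = ee x - ee y by rewrite mulmxBr !Zm_ee xT yT.
have -> : Rm A T + c *: ((ee x - ee y) *m (ee x - ee y)^T) =
          Rm (A + c *: ((ee x - ee y) *m (ee x - ee y)^T)) T by rewrite Rm_rank1 Zb.
have -> : \det (Rm (A + c *: ((ee x - ee y) *m (ee x - ee y)^T)) T) =
          \det (Q *m Rm (A + c *: ((ee x - ee y) *m (ee x - ee y)^T)) T *m Q^T).
  by rewrite !det_mulmx det_tr detQ mul1r mulr1.
rewrite conj mulmxDr mulmxDl -scalemxAr -scalemxAl.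
have -> : Q *m ((ee x - ee y) *m (ee x - ee y)^T) *m Q^T = (Q *m (ee x - ee y)) *m (Q *m (ee x - ee y))^T.
  by rewrite trmx_mul !mulmxA.
rewrite Qb Rm_rank1 mulmxN Zm_ee yT neg_rank1 cof_step //.
rewrite -conj !det_mulmx det_tr detQ mul1r mulr1; congr (_ + _ * \det _).
apply: RmP; rewrite ZQ //.
by rewrite !inE eqxx.
Qed.

End Lin.

Section Mtt.
Variables (V E : finType).
Implicit Types (en : E -> V * V) (A B F D : {set E}) (S T U : {set V}) (x y u v w a b r : V).

Definition Lap en D : 'M[rat]_#|V| :=
  \sum_(e in D) bc (en e).1 (en e).2 *m (bc (en e).1 (en e).2)^T.

Lemma Lap_cen en D x y : Lap (cen en x y) D = Pm x y *m Lap en D *m (Pm x y)^T.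
Proof.
rewrite /Lap mulmx_sumr mulmx_suml; apply: eq_bigr => e _.
by rewrite /cen /= -Pm_bc trmx_mul !mulmxA.
Qed.

Lemma Lap_add en D e : e \notin D ->
  Lap en (e |: D) = Lap en D + 1 *: (bc (en e).1 (en e).2 *m (bc (en e).1 (en e).2)^T).
Proof. by move=> eD; rewrite /Lap big_setU1 //= scale1r addrC. Qed.

Lemma idvS S x y u : x \in S -> x != y -> u \in S -> idv x y u \in S :\ y.
Proof. by move=> xS xy uS; rewrite !inE idv_neq //= /idv; case: ifP. Qed.

Definition valid S en D := [forall e in D, ((en e).1 \in S) && ((en e).2 \in S)].

Lemma mtt k : forall S en D r, #|D| = k -> valid S en D -> r \in S ->
  (ntD S en D)%:R = \det (Rm (Lap en D) (S :\ r)) :> rat.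
Proof.
elim: k => [|k IH] S en D r cD vD rS.
  move/eqP: cD; rewrite cards_eq0 => /eqP ->.
  have L0 : Lap en set0 = 0 by rewrite /Lap big_set0.
  rewrite L0.
  have [T0|[u uT]] := set_0Vmem (S :\ r).
    have -> : Rm 0 (S :\ r) = 1%:M.
      by apply/matrixP => i j; rewrite !mxE T0 !inE.
    rewrite det1 /ntD.
    have -> : [set F : {set E} | (F \subset set0) && spanning_tree S en F] = [set set0].
      apply/setP => F; rewrite !inE subset0; case: (F =P set0) => //= ->.
      rewrite /spanning_tree /connected_on; apply/andP; split.
        apply/forall_inP => a aS; apply/forall_inP => b bS.
        have ar : a = r.
          apply/eqP; apply: contraT => ne; have : a \in S :\ r by rewrite !inE ne aS.
        by rewrite T0 inE.
        have br : b = r.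
          apply/eqP; apply: contraT => ne; have : b \in S :\ r by rewrite !inE ne bS.
        by rewrite T0 inE.
        by rewrite ar br connect0.
      by apply/forall_inP => f; rewrite inE.
    by rewrite cards1.
  have -> : \det (Rm 0 (S :\ r)) = 0.
    rewrite (expand_det_row _ (er u)) big1 // => j _.
    rewrite !mxE erK uT /=; case: ifP => [_|/negbT]; first by rewrite mul0r.
    case: (er u =P j) => [<-|_]; last by rewrite mul0r.
    by rewrite erK uT.
  rewrite /ntD.
  have -> : [set F : {set E} | (F \subset set0) && spanning_tree S en F] = set0.
    apply/setP => F; rewrite !inE subset0; case: (F =P set0) => //= ->.
    apply/negP => /andP [/forall_inP h _].
    move: uT; rewrite !inE => /andP [ur uS].
    have := h u uS => /forall_inP /(_ r rS) /connect_set0 ur'.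
    by rewrite ur' eqxx in ur.
  by rewrite cards0.
have [e eD] : exists e, e \in D.
  apply/existsP; rewrite -(negbK [exists e, _]) negb_exists; apply/negP => /forallP h.
  have D0 : D = set0 by apply/setP => z; rewrite inE; apply/negbTE/h.
  by move: cD; rewrite D0 cards0.
set D' := D :\ e.
have eD' : e \notin D' by rewrite !inE eqxx.
have DD : D = e |: D' by rewrite setD1K.
have cD' : #|D'| = k by move: cD; rewrite (cardsD1 e D) eD add1n => -[].
have vD' : valid S en D'.
  by apply/forall_inP => f; rewrite inE => /andP [_ fD]; move/forall_inP: vD; apply.
have /andP [xS yS] := (forall_inP vD) e eD.
rewrite DD Lap_add //.
have [loop|xy] := eqVneq (en e).1 (en e).2.
  rewrite ntD_loop // loop /bc subrr mul0mx scaler0 addr0.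
  exact: IH.
rewrite (ntD_dc (x := (en e).1) (y := (en e).2)) //; last by case: (en e).
rewrite merge_det // natrD mul1r (IH S en D' r) //; congr (_ + _).
rewrite -Lap_cen; apply: IH => //; last by apply: idvS.
apply/forall_inP => f fD; have /andP [f1 f2] := (forall_inP vD') f fD.
by rewrite /cen /= !idvS.
Qed.

End Mtt.

Section Fin.
Variables (V E : finType).
Implicit Types (en : E -> V * V) (A B F D : {set E}) (S T U : {set V}) (x y u v w a b r : V).

Lemma valid_cen S en D x y : valid S en D -> x \in S -> x != y ->
  valid (S :\ y) (cen en x y) D.
Proof.
move=> vD xS xy; apply/forall_inP => f fD; have /andP [f1 f2] := (forall_inP vD) f fD.
by rewrite /cen /= !idvS.
Qed.

Lemma ntD_eq S en D r : valid S en D -> r \in S ->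
  (ntD S en D)%:R = \det (Rm (Lap en D) (S :\ r)) :> rat.
Proof. by move=> vD rS; apply: (mtt (erefl #|D|)). Qed.

Lemma KD S en D r x y (c : rat) : valid S en D -> r \in S -> x \in S -> y \in S ->
  \det (Rm (Lap en D + c *: (bc x y *m (bc x y)^T)) (S :\ r)) =
  (ntD S en D)%:R + c * (if x == y then 0 else ntD (S :\ y) (cen en x y) D)%:R.
Proof.
move=> vD rS xS yS; have [xy|xy] := eqVneq x y.
  by rewrite xy /bc subrr mul0mx scaler0 addr0 mulr0 addr0 (ntD_eq vD rS).
rewrite merge_det // -(ntD_eq vD rS) -Lap_cen -ntD_eq //; first exact: valid_cen.
exact: idvS.
Qed.


End Fin.

Section Alg.
Variable m : nat.
Definition fm (iM : 'M[rat]_m) (u v : 'cV[rat]_m) := (u^T *m iM *m v) 0 0.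

Lemma entry_sub (X Y : 'M[rat]_1) : (X - Y) 0 0 = X 0 0 - Y 0 0.
Proof. by rewrite !mxE. Qed.

Lemma fexp iM (u1 u2 v1 v2 : 'cV[rat]_m) :
  fm iM (u1 - u2) (v1 - v2) = fm iM u1 v1 - fm iM u1 v2 - fm iM u2 v1 + fm iM u2 v2.
Proof.
have tB : (u1 - u2)^T = u1^T - u2^T by apply/matrixP => i j; rewrite !mxE.
rewrite /fm tB !mulmxBl !mulmxBr !entry_sub; ring.
Qed.

Lemma fsym iM (u v : 'cV[rat]_m) : iM^T = iM -> fm iM u v = fm iM v u.
Proof.
move=> h; rewrite /fm.
have e : forall X : 'M[rat]_1, X 0 0 = X^T 0 0 by move=> X; rewrite mxE.
by rewrite [LHS]e !trmx_mul trmxK h mulmxA.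
Qed.
End Alg.

Lemma Lap_sym (V E : finType) (en : E -> V * V) D : (Lap en D)^T = Lap en D.
Proof.
rewrite /Lap linear_sum; apply: eq_bigr => e _ /=.
by rewrite trmx_mul trmxK.
Qed.

Lemma Rm_sym (V : finType) (A : 'M[rat]_#|V|) (T : {set V}) : A^T = A -> (Rm A T)^T = Rm A T.
Proof.
move=> h; apply/matrixP => i j; rewrite !mxE andbC eq_sym.
by case: ifP => // _; move/matrixP: h => /(_ j i); rewrite mxE.
Qed.

Theorem corollary5p2 (V E : finType) (en : E -> V * V)
    (Hconn : connected_graph ((setT : {set V}), en))
    (ei : E) (s t : V) :
  let G := ((setT : {set V}), en) in
  let p := (en ei).1 in
  let q := (en ei).2 in
  (ntrees G)%:R * (tid2 G p q s t)%:R
  = (tid G s t)%:R * (tid G p q)%:R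
    - 4%:R^-1 * ((tid G p s)%:R - (tid G q s)%:R - (tid G p t)%:R + (tid G q t)%:R) ^+ 2
    :> rat.
Proof.
move=> G p q.
have tE : forall a b, tid G a b = if a == b then 0%N else ntD (setT :\ b) (cen en a b) setT.
  move=> a b; rewrite /tid; case: eqP => // _; rewrite /ntrees /ntD.
  by apply: eq_card => F; rewrite !inE subsetT.
have t0E : ntrees G = ntD setT en setT.
  by rewrite /ntrees /ntD; apply: eq_card => F; rewrite !inE subsetT.
have [pq|pq] := eqVneq p q.
  rewrite pq /tid2 eqxx (tE q q) eqxx.
  set a := (tid G q s)%:R; set b := (tid G q t)%:R.
  rewrite subrr sub0r addNr expr0n /= mulr0 subr0 !mulr0.
  done.
have vG : valid setT en setT by apply/forall_inP => f _; rewrite !inE.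
set L := Lap en setT.
set T := setT :\ p.
set M := Rm L T.
have pS : p \in [set: V] by rewrite inE.
have tGE : (ntrees G)%:R = \det M by rewrite t0E (ntD_eq vG pS).
have tpos : (0 < ntrees G)%N.
  have [F /andP [_ stF]] := exists_tree Hconn.
  by apply/card_gt0P; exists F; rewrite inE.
have D0nz : \det M != 0 by rewrite -tGE pnatr_eq0 -lt0n.
have Mu : M \in unitmx by rewrite unitmxE unitfE.
set iM := invmx M.
have Msym : M^T = M by apply: Rm_sym; apply: Lap_sym.
have iMsym : iM^T = iM by rewrite /iM trmx_inv Msym.
set z := fun a => Zm T *m ee a.
have Zbc : forall a b, Zm T *m bc a b = z a - z b by move=> a b; rewrite /bc mulmxBr.
set D0 := \det M.
have Fab : forall a b, (tid G a b)%:R = D0 * fm iM (z a - z b) (z a - z b).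
  move=> a b.
  have h1 := KD 1 vG pS (in_setT a) (in_setT b).
  have h2 := rank2 (Zm T *m bc a b) (Zm T *m bc a b) 1 0 Mu.
  rewrite scale0r addr0 -Rm_rank1 -/L -/T in h2.
  rewrite h2 -tE -t0E tGE -/D0 -/iM Zbc in h1.
  apply: (@addrI _ D0); rewrite -[in LHS](mul1r (tid G a b)%:R) -h1 /fm; ring.
set s' := idv p q s. set t' := idv p q t.
have t2E : tid2 G p q s t = if s' == t' then 0%N else ntD ((setT :\ q) :\ t') (cen (cen en p q) s' t') setT.
  rewrite /tid2 (negbTE pq) /tid; case: eqP => // _; rewrite /ntrees /ntD.
  by apply: eq_card => F; rewrite !inE subsetT.
have F2 : \det (Rm (L + 1 *: (bc s t *m (bc s t)^T) + 1 *: (bc p q *m (bc p q)^T)) T)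
          = D0 + (tid G s t)%:R + ((tid G p q)%:R + (tid2 G p q s t)%:R).
  rewrite merge_det ?inE //.
  have idp : idv p q p = p by rewrite /idv (negbTE pq).
  rewrite idp (KD 1 vG pS (in_setT s) (in_setT t)) -t0E tGE -/D0.
  have -> : Pm p q *m (L + 1 *: (bc s t *m (bc s t)^T)) *m (Pm p q)^T =
            Lap (cen en p q) setT + 1 *: (bc s' t' *m (bc s' t')^T).
    rewrite mulmxDr mulmxDl /L -Lap_cen -scalemxAr -scalemxAl; congr (_ + _ *: _).
    by rewrite -Pm_bc trmx_mul !mulmxA.
  have pS' : p \in setT :\ q by rewrite !inE pq.
  have vG' := valid_cen vG (in_setT p) pq.
  rewrite (KD 1 vG' pS' (idvS (in_setT p) pq (in_setT s)) (idvS (in_setT p) pq (in_setT t))).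
  rewrite (tE s t) (tE p q) (negbTE pq) t2E -/s' -/t'; ring.
have SY : \det (Rm (L + 1 *: (bc s t *m (bc s t)^T) + 1 *: (bc p q *m (bc p q)^T)) T) =
   D0 * ((1 + 1 * fm iM (z s - z t) (z s - z t)) * (1 + 1 * fm iM (z p - z q) (z p - z q))
         - 1 * 1 * fm iM (z s - z t) (z p - z q) * fm iM (z p - z q) (z s - z t)).
  by rewrite !Rm_rank1 !Zbc (rank2 (z s - z t) (z p - z q) 1 1 Mu).
rewrite F2 !Fab in SY.
have CC : fm iM (z s - z t) (z p - z q) = fm iM (z p - z q) (z s - z t) by apply: fsym.
have t2v : (tid2 G p q s t)%:R = D0 * (fm iM (z p - z q) (z p - z q) * fm iM (z s - z t) (z s - z t)
            - fm iM (z p - z q) (z s - z t) ^+ 2).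
  have e : (tid2 G p q s t)%:R = (D0 + D0 * fm iM (z s - z t) (z s - z t) +
      (D0 * fm iM (z p - z q) (z p - z q) + (tid2 G p q s t)%:R)) - D0
      - D0 * fm iM (z s - z t) (z s - z t) - D0 * fm iM (z p - z q) (z p - z q) by ring.
  rewrite e SY CC; ring.
rewrite tGE -/D0 t2v !Fab !fexp.
rewrite (@fsym _ iM (z s) (z p) iMsym) (@fsym _ iM (z s) (z q) iMsym).
rewrite (@fsym _ iM (z t) (z p) iMsym) (@fsym _ iM (z t) (z q) iMsym).
rewrite (@fsym _ iM (z q) (z p) iMsym) (@fsym _ iM (z t) (z s) iMsym).
by field.
Qed.
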